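(* There are infinitely many mixed graphs $M_G$ with $\operatorname{rank} N(M_G)=2$ which are not determined by their spectrum.
   Context: A mixed graph $M_G$ is obtained from a finite simple graph $G$ by orienting the edges of some subset of $E(G)$. With $\omega=\frac{1+\mathbf{i}\sqrt3}{2}$, $N(M_G)$ has $(u,v)$-entry $\omega$ if $\overrightarrow{uv}$ is an arc, $\bar\omega$ if $\overrightarrow{vu}$ is an arc, $1$ for an undirected edge, $0$ otherwise; cospectral means same eigenvalue multiset of $N$. Mixed graphs are considered up to isomorphism. $\mathbb{T}_6=\{1,-1,\omega,\bar\omega,-\omega,-\bar\omega\}$. Given a partition $V(M_G)=\bigcup_{j\in\mathbb{T}_6}V_j$ into six possibly empty sets, an edge or arc $xy$ has type $(j,k)$ if $x\in V_j,y\in V_k$ (arcs directed from $x$ to $y$). The partition is admissible if every undirected edge has type $(j,j)$ or $(j,\omega j)$, and every arc has type $(j,j)$, $(j,\bar\omega j)$ or $(j,-\omega j)$, for some $j$. A three-way switching w.r.t. an admissible partition replaces each undirected edge of type $(j,\omega j)$ by an arc from $V_j$ to $V_{\omega j}$, replaces each arc of type $(j,\bar\omega j)$ by an undirected edge, and reverses each arc of type $(j,-\omega j)$. The converse reverses all arcs. Two mixed graphs are switching equivalent if one is obtained from the other by a sequence of three-way switchings and taking converses. A mixed graph is determined by its spectrum if it is switching equivalent to every mixed graph cospectral with it. *)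

(* Defs.v *)
From HB Require Import structures.
From mathcomp Require Import all_boot all_order all_algebra all_field.
Set Implicit Arguments. Unset Strict Implicit. Unset Printing Implicit Defensive.
Import Order.TTheory GRing.Theory Num.Theory.
From Stdlib Require Import Relations.Relation_Operators.
Local Open Scope ring_scope.

(* Kind of the (ordered) vertex pair (u,v) in a mixed graph:
   NoE : not adjacent; Und : undirected edge uv;
   Out : arc u -> v;   In : arc v -> u. *)
Inductive ekind := NoE | Und | Out | In.


Definition flip (a : ekind) : ekind :=
  match a with Out => In | In => Out | x => x end.

Definition mixed_graph (n : nat) := 'I_n -> 'I_n -> ekind.

Definition wf_mixed n (M : mixed_graph n) : Prop :=
  (forall u, M u u = NoE) /\ (forall u v, M v u = flip (M u v)).

Definition omega : algC := (1 + 'i * sqrtC 3%:R) / 2%:R.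

Definition kval (a : ekind) : algC :=
  match a with NoE => 0 | Und => 1 | Out => omega | In => omega^* end.

Definition Nmat n (M : mixed_graph n) : 'M[algC]_n := \matrix_(i, j) kval (M i j).

Definition cospectral n (M1 M2 : mixed_graph n) : Prop :=
  forall a : algC, mup a (char_poly (Nmat M1)) = mup a (char_poly (Nmat M2)).

Definition mg_iso n1 n2 (M1 : mixed_graph n1) (M2 : mixed_graph n2) : Prop :=
  exists h : 'I_n1 -> 'I_n2, bijective h /\ forall u v, M2 (h u) (h v) = M1 u v.

Definition T6 : seq algC := [:: 1; -1; omega; omega^*; - omega; - omega^*].

(* A partition V = U_{j in T6} V_j is encoded by the label map f (x in V_{f x}). *)
Definition admissible n (M : mixed_graph n) (f : 'I_n -> algC) : Prop :=
  (forall x, f x \in T6) /\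
  (forall x y, M x y = Und ->
     f y = f x \/ f y = omega * f x \/ f x = omega * f y) /\
  (forall x y, M x y = Out ->
     f y = f x \/ f y = omega^* * f x \/ f y = - omega * f x).

Definition switch_kind n (M : mixed_graph n) (f : 'I_n -> algC) x y : ekind :=
  match M x y with
  | NoE => NoE
  | Und => if f y == omega * f x then Out
           else if f x == omega * f y then In else Und
  | Out => if f y == omega^* * f x then Und
           else if f y == - omega * f x then In else Out
  | In  => if f x == omega^* * f y then Und
           else if f x == - omega * f y then Out else In
  end.

Definition three_way_switching n (M M' : mixed_graph n) : Prop :=
  exists f, admissible M f /\ forall x y, M' x y = switch_kind M f x y.

Definition converse n (M M' : mixed_graph n) : Prop :=
  forall x y, M' x y = flip (M x y).

(* One step: a three-way switching, taking the converse, or replacing a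
   graph by an isomorphic one (mixed graphs are considered up to isomorphism). *)
Definition sw_step n (M M' : mixed_graph n) : Prop :=
  three_way_switching M M' \/ converse M M' \/ mg_iso M M'.

Definition switching_equivalent n (M1 M2 : mixed_graph n) : Prop :=
  clos_refl_trans _ (@sw_step n) M1 M2 \/ clos_refl_trans _ (@sw_step n) M2 M1.

(* Determined by its spectrum (cospectral graphs necessarily have the same
   order, so we quantify over mixed graphs on the same vertex set). *)
Definition DS n (M : mixed_graph n) : Prop :=
  forall M' : mixed_graph n, wf_mixed M' -> cospectral M M' -> switching_equivalent M M'.

(* Main.v *)
Require Import Defs.
From mathcomp Require Import all_boot all_order all_algebra all_field.
From Stdlib Require Import Relations.Relation_Operators.
Import Order.TTheory GRing.Theory Num.Theory.
Local Open Scope ring_scope.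

Definition mk m n (l : seq (seq int)) : 'M[int]_(m, n) :=
  \matrix_(i < m, j < n) nth 0 (nth [::] l i) j.

Definition sA (a b : nat) : bool :=
  ((a == 0)%N && (0 < b < 5)%N) || ((b == 0)%N && (0 < a < 5)%N).
Definition sB (a b : nat) : bool := [&& (a < 4)%N, (b < 4)%N & odd (a + b)].

Definition star k : mixed_graph (5 + k) := fun u v => if sA u v then Und else NoE.
Definition cyc k : mixed_graph (5 + k) := fun u v => if sB u v then Und else NoE.

Definition Ai : 'M[int]_5 := \matrix_(i, j) (if sA i j then 1 else 0).
Definition Bi : 'M[int]_5 := \matrix_(i, j) (if sB i j then 1 else 0).
Definition Pi : 'M[int]_5 := mk 5 5 [:: [:: 2;3;-1;-1;-1]; [:: 0;3;3;-1;-1];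
  [:: 2;-3;1;1;1]; [:: 0;-1;-1;3;3]; [:: 0;1;1;1;-3]].
Definition Qi : 'M[int]_5 := mk 5 5 [:: [:: 2;0;2;0;0]; [:: 1;1;-1;1;0];
  [:: -1;2;1;0;0]; [:: 0;0;0;2;2]; [:: 0;1;0;1;-2]].
Definition Xi : 'M[int]_(5, 2) := mk 5 2 [:: [:: 1;0]; [:: 0;1]; [:: 0;1]; [:: 0;1]; [:: 0;1]].
Definition Yi : 'M[int]_(2, 5) := mk 2 5 [:: [:: 0;1;1;1;1]; [:: 1;0;0;0;0]].
Definition Li : 'M[int]_(2, 5) := mk 2 5 [:: [:: 1;0;0;0;0]; [:: 0;1;0;0;0]].
Definition Ri : 'M[int]_(5, 2) := mk 5 2 [:: [:: 0;1]; [:: 1;0]; [:: 0;0]; [:: 0;0]; [:: 0;0]].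

Lemma PQi : Pi *m Qi = 8%:M.
Proof.
apply/matrixP => i j; rewrite !mxE !big_ord_recr !big_ord0 /= !mxE.
by case: i => [[|[|[|[|[|i]]]]] Hi] //; case: j => [[|[|[|[|[|j]]]]] Hj].
Qed.

Lemma PAi : Pi *m Ai = Bi *m Pi.
Proof.
apply/matrixP => i j; rewrite !mxE !big_ord_recr !big_ord0 /= !mxE.
by case: i => [[|[|[|[|[|i]]]]] Hi] //; case: j => [[|[|[|[|[|j]]]]] Hj].
Qed.

Lemma XYi : Xi *m Yi = Ai.
Proof.
apply/matrixP => i j; rewrite !mxE !big_ord_recr !big_ord0 /= !mxE.
by case: i => [[|[|[|[|[|i]]]]] Hi] //; case: j => [[|[|[|[|[|j]]]]] Hj].
Qed.

Lemma LARi : Li *m Ai *m Ri = 1%:M.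
Proof.
apply/matrixP => i j; rewrite !mxE !big_ord_recr !big_ord0 /= !mxE.
rewrite !big_ord_recr !big_ord0 /= !mxE.
by case: i => [[|[|i]] Hi] //; case: j => [[|[|j]] Hj].
Qed.

Notation mpC := (map_mx (intr : int -> algC)).

Lemma cp_sim n (A B P Q : 'M[algC]_n) (d : algC) :
  d != 0 -> P *m Q = d%:M -> P *m A = B *m P -> char_poly A = char_poly B.
Proof.
move=> d0 PQ PA.
have dP : \det P != 0.
  apply/negP => /eqP H; have := congr1 determinant PQ.
  rewrite det_mulmx H mul0r det_scalar => /esym /eqP; rewrite expf_eq0.
  by rewrite (negbTE d0) andbF.
set P' := map_mx (@polyC algC) P.
have E : P' *m char_poly_mx A = char_poly_mx B *m P'.
  rewrite /char_poly_mx mulmxBr mulmxBl -!map_mxM PA.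
  by rewrite mul_mx_scalar mul_scalar_mx.
have := congr1 determinant E; rewrite !det_mulmx /P' det_map_mx -/(char_poly A) -/(char_poly B).
rewrite [_ * (\det P)%:P]mulrC; apply: mulfI.
by rewrite polyC_eq0.
Qed.

Lemma cp_block m k (A B P Q : 'M[algC]_m) (d : algC) :
  d != 0 -> P *m Q = d%:M -> P *m A = B *m P ->
  char_poly (block_mx A 0 0 (0 : 'M_k)) = char_poly (block_mx B 0 0 (0 : 'M_k)).
Proof.
move=> d0 PQ PA.
apply: (@cp_sim _ _ _ (block_mx P 0 0 1%:M) (block_mx Q 0 0 d%:M) d d0).
  by rewrite mulmx_block ?mulmx0 ?mul0mx ?addr0 ?add0r mul1mx PQ -scalar_mx_block.
by rewrite !mulmx_block ?mulmx0 ?mul0mx ?addr0 ?add0r PA.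
Qed.

Lemma rank_block m k (A : 'M[algC]_m) :
  \rank (block_mx A 0 0 (0 : 'M_k)) = \rank A.
Proof.
have E1 : block_mx A 0 0 (0 : 'M_k) = col_mx 1%:M 0 *m A *m row_mx 1%:M 0.
  by rewrite mul_col_mx mul_col_row ?mul1mx ?mulmx1 ?mulmx0 ?mul0mx.
have E2 : row_mx 1%:M 0 *m block_mx A 0 0 (0 : 'M_k) *m col_mx 1%:M 0 = A.
  by rewrite mul_row_block mul_row_col ?mul1mx ?mulmx1 ?mulmx0 ?mul0mx ?addr0.
apply/eqP; rewrite eqn_leq; apply/andP; split.
  by rewrite E1 (leq_trans (mxrankM_maxl _ _)) // mxrankM_maxr.
by rewrite -{1}E2 (leq_trans (mxrankM_maxl _ _)) // mxrankM_maxr.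
Qed.

Lemma sA_lt a b : sA a b -> (a < 5)%N /\ (b < 5)%N.
Proof.
by rewrite /sA => /orP [/andP [/eqP -> /andP [_ ->]] | /andP [/eqP -> /andP [_ ->]]].
Qed.

Lemma sB_lt a b : sB a b -> (a < 5)%N /\ (b < 5)%N.
Proof. by case/and3P => a4 b4 _; split; apply: ltnW. Qed.

Lemma Nmat_gen k (s : nat -> nat -> bool) (Si : 'M[int]_5) :
  (forall a b, s a b -> (a < 5)%N /\ (b < 5)%N) ->
  (forall (i j : 'I_5), Si i j = if s i j then 1 else 0) ->
  Nmat (fun u v : 'I_(5 + k) => if s u v then Und else NoE) = block_mx (mpC Si) 0 0 0.
Proof.
move=> Hs HS; apply/matrixP => i j; rewrite !mxE.
case: (splitP i) => i' Hi; rewrite !mxE; case: (splitP j) => j' Hj; rewrite !mxE ?Hi ?Hj.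
- by rewrite HS; case: (s _ _).
- have -> : s i' (5 + j')%N = false.
    by apply/negP => /Hs [_]; rewrite ltnNge leq_addr.
  by [].
- have -> : s (5 + i')%N j' = false.
    by apply/negP => /Hs []; rewrite ltnNge leq_addr.
  by [].
- have -> : s (5 + i')%N (5 + j')%N = false.
    by apply/negP => /Hs []; rewrite ltnNge leq_addr.
  by [].
Qed.

Lemma Nmat_star k : Nmat (star k) = block_mx (mpC Ai) 0 0 0.
Proof. by apply: Nmat_gen; [exact: sA_lt | move=> i j; rewrite mxE]. Qed.

Lemma Nmat_cyc k : Nmat (cyc k) = block_mx (mpC Bi) 0 0 0.
Proof. by apply: Nmat_gen; [exact: sB_lt | move=> i j; rewrite mxE]. Qed.

Lemma char_eq k : char_poly (Nmat (star k)) = char_poly (Nmat (cyc k)).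
Proof.
rewrite Nmat_star Nmat_cyc.
apply: (@cp_block _ _ _ _ (mpC Pi) (mpC Qi) 8%:R).
- by rewrite pnatr_eq0.
- by rewrite -map_mxM PQi map_scalar_mx.
- by rewrite -!map_mxM PAi.
Qed.

Lemma rank_star k : \rank (Nmat (star k)) = 2%N.
Proof.
rewrite Nmat_star rank_block; apply/eqP; rewrite eqn_leq; apply/andP; split.
  by rewrite -XYi map_mxM (leq_trans (mxrankM_maxl _ _)) // rank_leq_col.
have E : mpC Li *m mpC Ai *m mpC Ri = 1%:M by rewrite -!map_mxM LARi map_mx1.
have := mxrankM_maxl (mpC Li *m mpC Ai) (mpC Ri); rewrite E mxrank1 => H.
by apply: leq_trans H _; exact: mxrankM_maxr.
Qed.

Lemma wf_gen k (s : nat -> nat -> bool) :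
  (forall a, s a a = false) -> (forall a b, s a b = s b a) ->
  wf_mixed (fun u v : 'I_(5 + k) => if s u v then Und else NoE).
Proof. by move=> H1 H2; split => [u | u v]; rewrite ?H1 // H2; case: (s _ _). Qed.

Lemma wf_star k : wf_mixed (star k).
Proof.
apply: wf_gen => [a | a b]; last by rewrite /sA orbC.
by rewrite /sA orbb; case: eqP => // ->.
Qed.

Lemma wf_cyc k : wf_mixed (cyc k).
Proof.
apply: wf_gen => [a | a b]; first by rewrite /sB addnn odd_double !andbF.
by rewrite /sB addnC; case: (a < 4)%N; case: (b < 4)%N.
Qed.

Definition Inv n (M : mixed_graph n) : Prop :=
  exists x (s : seq 'I_n), [/\ uniq s, size s = 4%N & forall y, y \in s -> M x y <> NoE].

Arguments Inv {n}.

Lemma Inv_adj n (M1 M2 : mixed_graph n) :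
  (forall x y, M2 x y = NoE -> M1 x y = NoE) -> Inv M1 -> Inv M2.
Proof. by move=> H [x [s [u sz Hy]]]; exists x, s; split => // y /Hy Hn /H. Qed.

Lemma Inv_iso n (M1 M2 : mixed_graph n) (h : 'I_n -> 'I_n) :
  bijective h -> (forall u v, M2 (h u) (h v) = M1 u v) -> (Inv M1 <-> Inv M2).
Proof.
move=> hb H; have hi := bij_inj hb; case: hb => g hg gh; split.
  move=> [x [s [u sz Hy]]]; exists (h x), (map h s); split.
  - by rewrite map_inj_uniq.
  - by rewrite size_map.
  - by move=> y /mapP [z zs ->]; rewrite H; apply: Hy.
move=> [x [s [u sz Hy]]]; exists (g x), (map g s); split.
- by rewrite map_inj_uniq //; exact: (can_inj gh).
- by rewrite size_map.
- by move=> y /mapP [z zs ->]; rewrite -H !gh; apply: Hy.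
Qed.

Lemma switch_NoE n (M : mixed_graph n) f x y :
  switch_kind M f x y = NoE <-> M x y = NoE.
Proof. by rewrite /switch_kind; case: (M x y) => //; repeat case: ifP. Qed.

Lemma step_Inv n (M1 M2 : mixed_graph n) : sw_step M1 M2 -> (Inv M1 <-> Inv M2).
Proof.
case=> [[f [_ H]] | [H | [h [hb H]]]].
- split; apply: Inv_adj => x y; rewrite H => /switch_NoE //; apply/switch_NoE.
- split; apply: Inv_adj => x y; rewrite H; by case: (M1 x y).
- exact: Inv_iso hb H.
Qed.

Lemma crt_Inv n (M1 M2 : mixed_graph n) :
  clos_refl_trans _ (@sw_step n) M1 M2 -> (Inv M1 <-> Inv M2).
Proof.
elim=> [x y /step_Inv // | x // | x y z _ H1 _ H2].
exact: iff_trans H1 H2.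
Qed.

Lemma Inv_star k : Inv (star k).
Proof.
have o : forall i, (i < 5)%N -> (i < 5 + k)%N by move=> i Hi; apply: leq_trans Hi (leq_addr _ _).
exists (Ordinal (o 0%N isT)).
exists [:: Ordinal (o 1%N isT); Ordinal (o 2%N isT); Ordinal (o 3%N isT); Ordinal (o 4%N isT)].
split => //.
by move=> y; rewrite !inE => /or4P [] /eqP ->.
Qed.

Lemma not_Inv_cyc k : ~ Inv (cyc k).
Proof.
move=> [x [s [u sz Hy]]].
have U : uniq (map val s) by rewrite map_inj_uniq //; exact: val_inj.
have sub : {subset map val s <= [seq y <- iota 0 4 | odd (x + y)]}.
  move=> y /mapP [z zs ->]; have := Hy z zs; rewrite /cyc.
  case: ifP => // /and3P [_ zl od] _.
  by rewrite mem_filter od mem_iota.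
have := uniq_leq_size U sub; rewrite size_map sz /= !oddD /=.
by case: (odd x).
Qed.

Lemma not_DS k : ~ DS (star k).
Proof.
move=> H; have := H (cyc k) (wf_cyc k).
have cs : cospectral (star k) (cyc k) by move=> a; rewrite char_eq.
move=> /(_ cs) [/crt_Inv E | /crt_Inv E].
  by apply: (@not_Inv_cyc k); apply/E; apply: Inv_star.
by apply: (@not_Inv_cyc k); apply/E; apply: Inv_star.
Qed.

Theorem proposition5p11 :
  exists g : nat -> {n : nat & mixed_graph n},
    (forall k, wf_mixed (projT2 (g k)) /\
               \rank (Nmat (projT2 (g k))) = 2%N /\
               ~ DS (projT2 (g k))) /\
    (forall i j, i <> j -> ~ mg_iso (projT2 (g i)) (projT2 (g j))).
Proof.
exists (fun k => existT _ (5 + k)%N (star k)); split.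
  by move=> k /=; split; [exact: wf_star | split; [exact: rank_star | exact: not_DS]].
move=> i j ij /= [h [hb _]]; have := bij_eq_card hb.
rewrite !card_ord => /eqP; rewrite eqn_add2l => /eqP.
exact: ij.
Qed.
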